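(* Let $G_n$ be a finite simple graph with a fully interconnected graph decomposition $(G_{n_1},\ldots,G_{n_k})$. For each $i\in\{1,\ldots,k\}$ let $\lambda_{i,1},\ldots,\lambda_{i,n_i-1}$ be eigenvalues of $L_{G_{n_i}}$ with real eigenvectors $\mathbf v_{i,1},\ldots,\mathbf v_{i,n_i-1}\in\mathbb R^{V(G_{n_i})}$ such that $\{\mathbf v_{i,1},\ldots,\mathbf v_{i,n_i-1},\tfrac{1}{\sqrt{n_i}}\mathbf 1_{n_i}\}$ is an orthonormal basis of $\mathbb R^{V(G_{n_i})}$. For $j=1,\ldots,k$ let $\alpha_j(1),\ldots,\alpha_j(k)\in\mathbb R$ and let $\mathbf x_j\in\mathbb R^{V(G_n)}$ be the vector with $\mathbf x_j(v)=\alpha_j(l)$ for $v\in V(G_{n_l})$; put $N_j=\sum_{l=1}^k n_l\alpha_j(l)^2$. Assume $\{\mathbf x_j/\sqrt{N_j}\}_{j=1}^k$ is orthonormal and $L_{G_n}\mathbf x_j=\nu_j\mathbf x_j$ for real numbers $\nu_1,\ldots,\nu_k$ (equivalently, $\overline{L}_{G_n}(\alpha_j(1),\ldots,\alpha_j(k))^T=\nu_j(\alpha_j(1),\ldots,\alpha_j(k))^T$). Then for all $t\ge0$: (1) If $x,y\in V(G_{n_i})$, then $$P^x_{G_n,t}(y)=P^x_{G_{n_i},t}(y)+\widetilde P_{i,t}-\frac1{n_i^2}-\frac2{n_i}\sum_{j=1}^{n_i-1}\mathbf v_{i,j}(x)\mathbf v_{i,j}(y)\cos(t\lambda_{i,j})+2\sum_{j=1}^{n_i-1}\sum_{j'=1}^k\frac{\mathbf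 v_{i,j}(x)\mathbf v_{i,j}(y)\alpha_{j'}(i)^2\cos\{t(\lambda_{i,j}+\widetilde d_i-\nu_{j'})\}}{N_{j'}},$$ where $$P^x_{G_{n_i},t}(y)=\sum_{j=1}^{n_i-1}\mathbf v_{i,j}(x)^2\mathbf v_{i,j}(y)^2+\frac1{n_i^2}+2\sum_{1\le j<j'\le n_i-1}\mathbf v_{i,j}(x)\mathbf v_{i,j}(y)\mathbf v_{i,j'}(x)\mathbf v_{i,j'}(y)\cos\{t(\lambda_{i,j}-\lambda_{i,j'})\}+\frac2{n_i}\sum_{j=1}^{n_i-1}\mathbf v_{i,j}(x)\mathbf v_{i,j}(y)\cos(t\lambda_{i,j})$$ is the transition probability of the CTQW on $G_{n_i}$ itself, and $$\widetilde P_{i,t}=\sum_{j=1}^k\frac{\alpha_j(i)^4}{N_j^2}+2\sum_{1\le j<j'\le k}\frac{\alpha_j(i)^2\alpha_{j'}(i)^2\cos\{t(\nu_j-\nu_{j'})\}}{N_jN_{j'}}.$$ (2) If $x\in V(G_{n_i})$ and $y\in V(G_{n_{i'}})$ with $i\ne i'$, then $$P^x_{G_n,t}(y)=\sum_{j=1}^k\frac{\alpha_j(i)^2\alpha_j(i')^2}{N_j^2}+2\sum_{1\le j<j'\le k}\frac{\alpha_j(i)\alpha_j(i')\alpha_{j'}(i)\alpha_{j'}(i')\cos\{t(\nu_j-\nu_{j'})\}}{N_jN_{j'}}.$$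
   Context: For a finite simple graph $G$ with vertex set $V(G)$, $A_G$ is its adjacency matrix, $D_G$ the diagonal degree matrix, and $L_G=D_G-A_G$ its Laplacian. The continuous-time quantum walk (CTQW) on $G$ has evolution operator $U_{G,t}=e^{\sqrt{-1}\,tL_G}$ ($t\ge0$), and for $x,y\in V(G)$ the transition probability is $P^x_{G,t}(y)=|(U_{G,t})_{x,y}|^2$ (walker starting at $x$). A fully interconnected graph decomposition of a simple graph $G_n$ on $n$ vertices is a tuple $(G_{n_1},\ldots,G_{n_k})$ of induced subgraphs of $G_n$, $G_{n_i}$ having $n_i$ vertices, whose vertex sets partition $V(G_n)$, such that for every $i\ne j$ either every vertex of $G_{n_i}$ is adjacent to every vertex of $G_{n_j}$ (written $G_{n_i}\sim G_{n_j}$) or no vertex of $G_{n_i}$ is adjacent to any vertex of $G_{n_j}$. Set $\widetilde d_i=\sum_{j:\,G_{n_i}\sim G_{n_j}}n_j$. $\overline L_{G_n}$ is the $k\times k$ matrix with diagonal entries $\widetilde d_i$, $(i,j)$ entry $-n_j$ if $G_{n_i}\sim G_{n_j}$ ($i\neq j$), and $0$ otherwise. $\mathbf 1_m$ is the all-ones vector of length $m$; $\mathbf v(x)$ denotes the component of a vector at vertex $x$. *)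

(* Defs.v *)
From Stdlib Require Import Reals List Arith ClassicalEpsilon.
Import ListNotations.
Open Scope R_scope.

(* Vertices are natural numbers; a graph is given by a finite vertex list V
   (duplicate-free) and a boolean adjacency relation adj. *)

Fixpoint rsum (m : nat) (f : nat -> R) : R :=
  match m with O => 0 | S p => rsum p f + f p end.

Definition lsum (V : list nat) (f : nat -> R) : R :=
  fold_right (fun z acc => f z + acc) 0 V.

Definition deg (V : list nat) (adj : nat -> nat -> bool) (x : nat) : R :=
  lsum V (fun z => if adj x z then 1 else 0).

Definition Lap (V : list nat) (adj : nat -> nat -> bool) (x y : nat) : R :=
  (if Nat.eqb x y then deg V adj x else 0) - (if adj x y then 1 else 0).

Definition matmul (V : list nat) (A B : nat -> nat -> R) (x y : nat) : R :=
  lsum V (fun z => A x z * B z y).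

Fixpoint matpow (V : list nat) (A : nat -> nat -> R) (p : nat) : nat -> nat -> R :=
  match p with
  | O => fun x y => if Nat.eqb x y then 1 else 0
  | S q => matmul V A (matpow V A q)
  end.

Definition series_value (f : nat -> R) : R :=
  epsilon (inhabits 0) (fun l => infinite_sum f l).

(* U_t = e^{i t L} = Σ_m (i t L)^m / m! ; real and imaginary parts of entries *)
Definition Ure (V : list nat) (adj : nat -> nat -> bool) (t : R) (x y : nat) : R :=
  series_value (fun m => (-1) ^ m * t ^ (2 * m) / INR (fact (2 * m))
                          * matpow V (Lap V adj) (2 * m) x y).

Definition Uim (V : list nat) (adj : nat -> nat -> bool) (t : R) (x y : nat) : R :=
  series_value (fun m => (-1) ^ m * t ^ (2 * m + 1) / INR (fact (2 * m + 1))
                          * matpow V (Lap V adj) (2 * m + 1) x y).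

Definition Ptrans (V : list nat) (adj : nat -> nat -> bool) (t : R) (x y : nat) : R :=
  Ure V adj t x y ^ 2 + Uim V adj t x y ^ 2.

(* vertex set of the i-th block of the decomposition given by c : V(G_n) -> blocks *)
Definition part (n : nat) (c : nat -> nat) (i : nat) : list nat :=
  filter (fun v => Nat.eqb (c v) i) (seq 0 n).

Definition all_adj (n : nat) (c : nat -> nat) (adj : nat -> nat -> bool) (i j : nat) : Prop :=
  forall x y, In x (part n c i) -> In y (part n c j) -> adj x y = true.

Definition no_adj (n : nat) (c : nat -> nat) (adj : nat -> nat -> bool) (i j : nat) : Prop :=
  forall x y, In x (part n c i) -> In y (part n c j) -> adj x y = false.

Definition dtilde (n k : nat) (c : nat -> nat) (adj : nat -> nat -> bool) (i : nat) : R :=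
  rsum k (fun j => if excluded_middle_informative (j <> i /\ all_adj n c adj i j)
                   then INR (length (part n c j)) else 0).

(* Main.v *)
Require Import Defs.
From Stdlib Require Import Reals List Arith Lia Lra ClassicalEpsilon.
From mathcomp Require all_boot all_algebra Rstruct.
Open Scope R_scope.

Module Compl.
Import all_boot all_algebra Rstruct.
Import GRing.Theory.

Lemma lsum_big (V : list nat) (f : nat -> R) :
  lsum V f = (\sum_(a < length V) f (List.nth a V 0%N))%R.
Proof.
elim: V => [|z V IH] /=; first by rewrite big_ord0.
by rewrite big_ord_recl /= IH.
Qed.

Lemma rsum_big (m : nat) (f : nat -> R) :
  rsum m f = (\sum_(p < m) f p)%R.
Proof.
elim: m => [|m IH] /=; first by rewrite big_ord0.
by rewrite big_ord_recr /= IH.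
Qed.

Lemma completeness (V : list nat) (e : nat -> nat -> R) :
  NoDup V ->
  (forall p q, lt p (length V) -> lt q (length V) ->
     lsum V (fun z => e p z * e q z) = if Nat.eqb p q then 1 else 0) ->
  forall x y, In x V -> In y V ->
    rsum (length V) (fun p => e p x * e p y) = if Nat.eqb x y then 1 else 0.
Proof.
move=> HV Hon x y Hx Hy.
set m := length V.
pose Q : 'M[R]_m := (\matrix_(p < m, a < m) e p (List.nth a V 0%N))%R.
have HQ : (Q *m Q^T)%R = 1%:M%R.
  apply/matrixP => p q; rewrite !mxE.
  have -> : (\sum_j Q p j * Q^T j q)%R = lsum V (fun z => e p z * e q z).
    rewrite lsum_big; apply: eq_bigr => a _; by rewrite !mxE.
  rewrite Hon; try (apply/ltP; exact: ltn_ord).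
  case: (eqVneq p q) => [->|Hpq].
    by rewrite Nat.eqb_refl.
  have -> : Nat.eqb p q = false.
    apply/Nat.eqb_neq => H; move/eqP: Hpq; apply; exact: ord_inj.
  by [].
have HQ' := mulmx1C HQ.
have [a [Ha Hxa]] := In_nth V x 0%N Hx.
have [b [Hb Hyb]] := In_nth V y 0%N Hy.
have Ha' : (a < m)%N by apply/ltP.
have Hb' : (b < m)%N by apply/ltP.
have := congr1 (fun M : 'M[R]_m => M (Ordinal Ha') (Ordinal Hb')) HQ'.
rewrite /= !mxE.
have -> : (\sum_j Q^T (Ordinal Ha') j * Q j (Ordinal Hb'))%R
   = rsum m (fun p => e p x * e p y).
  rewrite rsum_big; apply: eq_bigr => p _; by rewrite !mxE /= Hxa Hyb.
move=> ->.
case: (eqVneq (Ordinal Ha') (Ordinal Hb')) => [E|E] /=.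
  have Eab : a = b by case: E.
  by rewrite -Hxa -Hyb Eab Nat.eqb_refl.
have -> : Nat.eqb x y = false.
  apply/Nat.eqb_neq => Exy; move/eqP: E; apply; apply: ord_inj => /=.
  apply: (proj1 (NoDup_nth V 0%N) HV) => //. by rewrite Hxa Hyb.
by [].
Qed.
End Compl.

Lemma sv_eq f l : infinite_sum f l -> series_value f = l.
Proof.
intro H. unfold series_value. apply (uniqueness_sum f).
- apply epsilon_spec. exists l. exact H.
- exact H.
Qed.

Lemma isum_ext f g l : (forall m, f m = g m) -> infinite_sum f l -> infinite_sum g l.
Proof.
intros E H eps He. destruct (H eps He) as [N HN]. exists N. intros m Hm.
rewrite <- (sum_eq f g m) by (intros; apply E). apply HN; exact Hm.
Qed.

Lemma isum_plus f g a b : infinite_sum f a -> infinite_sum g b ->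
  infinite_sum (fun m => f m + g m) (a + b).
Proof.
intros Ha Hb.
assert (H : Un_cv (fun N => sum_f_R0 f N + sum_f_R0 g N) (a + b)).
{ apply CV_plus; [exact Ha | exact Hb]. }
intros eps He. destruct (H eps He) as [N HN]. exists N. intros m Hm.
rewrite plus_sum. apply HN; exact Hm.
Qed.

Lemma isum_scal f a c : infinite_sum f a -> infinite_sum (fun m => c * f m) (c * a).
Proof.
intros Ha.
assert (H : Un_cv (fun N => sum_f_R0 f N * c) (a * c)).
{ apply CV_mult; [exact Ha|]. intros eps He. exists 0%nat. intros.
  unfold R_dist. rewrite Rminus_diag, Rabs_R0. exact He. }
intros eps He. destruct (H eps He) as [N HN]. exists N. intros m Hm.
replace (sum_f_R0 (fun m0 => c * f m0) m) with (sum_f_R0 f m * c).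
- replace (c * a) with (a * c) by ring. apply HN; exact Hm.
- rewrite Rmult_comm, scal_sum. apply sum_eq. intros; ring.
Qed.

Lemma isum_zero : infinite_sum (fun _ => 0) 0.
Proof.
intros eps He. exists 0%nat. intros m Hm. unfold R_dist.
replace (sum_f_R0 (fun _ => 0) m) with 0.
- rewrite Rminus_diag, Rabs_R0. exact He.
- induction m; simpl; [reflexivity| rewrite <- IHm; [ring| lia]].
Qed.

Lemma sq_pow (x : R) (i : nat) : (Rsqr x) ^ i = x ^ (2 * i).
Proof. unfold Rsqr. rewrite pow_mult. simpl. rewrite Rmult_1_r. reflexivity. Qed.

Lemma cos_term t mu a :
  infinite_sum (fun m => (-1) ^ m * t ^ (2 * m) / INR (fact (2 * m)) * (a * mu ^ (2 * m)))
    (a * cos (t * mu)).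
Proof.
unfold cos. destruct (exist_cos (Rsqr (t * mu))) as [A HA].
unfold cos_in in HA. apply (isum_ext (fun m => a * (cos_n m * (Rsqr (t*mu)) ^ m))).
- intro m. rewrite sq_pow, Rpow_mult_distr. unfold cos_n. unfold Rdiv. ring.
- apply isum_scal. exact HA.
Qed.

Lemma sin_term t mu a :
  infinite_sum (fun m => (-1) ^ m * t ^ (2 * m + 1) / INR (fact (2 * m + 1)) * (a * mu ^ (2 * m + 1)))
    (a * sin (t * mu)).
Proof.
unfold sin. destruct (exist_sin (Rsqr (t * mu))) as [A HA].
unfold sin_in in HA.
replace (a * (t * mu * A)) with ((a * (t * mu)) * A) by ring.
apply (isum_ext (fun m => (a * (t * mu)) * (sin_n m * (Rsqr (t*mu)) ^ m))).
- intro m. rewrite sq_pow, !pow_add, !Rpow_mult_distr. unfold sin_n. unfold Rdiv. simpl. ring.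
- apply isum_scal. exact HA.
Qed.

Lemma isum_rsum_cos t m0 a mu :
  infinite_sum (fun m => (-1) ^ m * t ^ (2 * m) / INR (fact (2 * m))
                  * rsum m0 (fun p => a p * mu p ^ (2 * m)))
    (rsum m0 (fun p => a p * cos (t * mu p))).
Proof.
induction m0 as [|m0 IH]; simpl.
- apply (isum_ext (fun _ => 0)); [intro; ring | apply isum_zero].
- eapply isum_ext; [| apply isum_plus; [exact IH | apply (cos_term t (mu m0) (a m0))]].
  intro m; simpl; ring.
Qed.

Lemma isum_rsum_sin t m0 a mu :
  infinite_sum (fun m => (-1) ^ m * t ^ (2 * m + 1) / INR (fact (2 * m + 1))
                  * rsum m0 (fun p => a p * mu p ^ (2 * m + 1)))
    (rsum m0 (fun p => a p * sin (t * mu p))).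
Proof.
induction m0 as [|m0 IH]; simpl.
- apply (isum_ext (fun _ => 0)); [intro; ring | apply isum_zero].
- eapply isum_ext; [| apply isum_plus; [exact IH | apply (sin_term t (mu m0) (a m0))]].
  intro m; simpl; ring.
Qed.

Lemma Ure_spec V adj t x y m a mu m' b nu :
  (forall q, matpow V (Lap V adj) q x y =
     rsum m (fun p => a p * mu p ^ q) + rsum m' (fun p => b p * nu p ^ q)) ->
  Ure V adj t x y = rsum m (fun p => a p * cos (t * mu p)) + rsum m' (fun p => b p * cos (t * nu p)).
Proof.
intro H. unfold Ure. apply sv_eq.
eapply isum_ext; [| apply isum_plus; [apply (isum_rsum_cos t m a mu) | apply (isum_rsum_cos t m' b nu)]].
intro q. rewrite H. simpl. ring.
Qed.

Lemma Uim_spec V adj t x y m a mu m' b nu :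
  (forall q, matpow V (Lap V adj) q x y =
     rsum m (fun p => a p * mu p ^ q) + rsum m' (fun p => b p * nu p ^ q)) ->
  Uim V adj t x y = rsum m (fun p => a p * sin (t * mu p)) + rsum m' (fun p => b p * sin (t * nu p)).
Proof.
intro H. unfold Uim. apply sv_eq.
eapply isum_ext; [| apply isum_plus; [apply (isum_rsum_sin t m a mu) | apply (isum_rsum_sin t m' b nu)]].
intro q. rewrite H. simpl. ring.
Qed.

Lemma rsum_ext m f g : (forall p, (p < m)%nat -> f p = g p) -> rsum m f = rsum m g.
Proof.
induction m; intro H; simpl; [reflexivity|].
rewrite IHm by (intros; apply H; lia). rewrite H by lia. reflexivity.
Qed.

Lemma rsum_plus m f g : rsum m (fun p => f p + g p) = rsum m f + rsum m g.
Proof. induction m; simpl; [ring| rewrite IHm; ring]. Qed.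

Lemma rsum_scal m c f : rsum m (fun p => c * f p) = c * rsum m f.
Proof. induction m; simpl; [ring| rewrite IHm; ring]. Qed.

Lemma rsum_zero m : rsum m (fun _ => 0) = 0.
Proof. induction m; simpl; [ring| rewrite IHm; ring]. Qed.

Lemma rsum_ind k i D : (i < k)%nat -> rsum k (fun l => if Nat.eqb l i then D else 0) = D.
Proof.
induction k; intro H; [lia|]. simpl.
destruct (Nat.eq_dec i k) as [->|Hne].
- rewrite Nat.eqb_refl. rewrite (rsum_ext k _ (fun _ => 0)).
  + rewrite rsum_zero; ring.
  + intros p Hp. destruct (Nat.eqb_spec p k); [lia| reflexivity].
- rewrite IHk by lia. destruct (Nat.eqb_spec k i); [lia| ring].
Qed.

Lemma rsum_swap m m' (f : nat -> nat -> R) :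
  rsum m (fun p => rsum m' (fun q => f p q)) = rsum m' (fun q => rsum m (fun p => f p q)).
Proof.
induction m; simpl.
- rewrite rsum_zero; reflexivity.
- rewrite IHm, <- rsum_plus. reflexivity.
Qed.

Lemma lsum_ext V f g : (forall z, In z V -> f z = g z) -> lsum V f = lsum V g.
Proof.
induction V; intro H; simpl; [reflexivity|].
rewrite H by (left; reflexivity). rewrite IHV by (intros; apply H; right; assumption). reflexivity.
Qed.

Lemma lsum_plus V f g : lsum V (fun z => f z + g z) = lsum V f + lsum V g.
Proof. induction V; simpl; [ring| rewrite IHV; ring]. Qed.

Lemma lsum_scal V c f : lsum V (fun z => c * f z) = c * lsum V f.
Proof. induction V; simpl; [ring| rewrite IHV; ring]. Qed.

Lemma lsum_zero V : lsum V (fun _ => 0) = 0.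
Proof. induction V; simpl; [ring| rewrite IHV; ring]. Qed.

Lemma lsum_const V c : lsum V (fun _ => c) = INR (length V) * c.
Proof. induction V; simpl length; [simpl; ring|]. rewrite S_INR. simpl. rewrite IHV. ring. Qed.

Lemma lsum_rsum V m (f : nat -> nat -> R) :
  lsum V (fun z => rsum m (fun p => f p z)) = rsum m (fun p => lsum V (f p)).
Proof.
induction m; simpl.
- apply lsum_zero.
- rewrite lsum_plus, IHm. reflexivity.
Qed.

Lemma lsum_delta V x h : NoDup V -> In x V ->
  lsum V (fun z => if Nat.eqb x z then h z else 0) = h x.
Proof.
induction V as [|a V IH]; intros ND Hx; [destruct Hx|].
inversion ND; subst. simpl.
destruct Hx as [->|Hx].
- rewrite Nat.eqb_refl. rewrite (lsum_ext V _ (fun _ => 0)).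
  + rewrite lsum_zero; ring.
  + intros z Hz. destruct (Nat.eqb_spec x z); [subst; contradiction| reflexivity].
- destruct (Nat.eqb_spec x a); [subst; contradiction|]. rewrite IH by assumption. ring.
Qed.

Lemma lsum_filter (p : nat -> bool) l f :
  lsum (filter p l) f = lsum l (fun z => if p z then f z else 0).
Proof.
induction l; simpl; [reflexivity|]. destruct (p a); simpl; rewrite IHl; ring.
Qed.

Lemma in_part n c i x : In x (part n c i) <-> (x < n)%nat /\ c x = i.
Proof.
unfold part. rewrite filter_In, in_seq, Nat.eqb_eq. lia.
Qed.

Lemma nodup_part n c i : NoDup (part n c i).
Proof. unfold part. apply NoDup_filter, seq_NoDup. Qed.

Lemma group_sum n k c f : (forall x, (x < n)%nat -> (c x < k)%nat) ->
  lsum (seq 0 n) f = rsum k (fun l => lsum (part n c l) f).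
Proof.
intro Hc. unfold part.
rewrite (rsum_ext k _ (fun l => lsum (seq 0 n) (fun z => if Nat.eqb (c z) l then f z else 0)))
  by (intros; apply lsum_filter).
rewrite <- lsum_rsum. apply lsum_ext. intros z Hz. apply in_seq in Hz.
rewrite (rsum_ext k _ (fun l => if Nat.eqb l (c z) then f z else 0)).
- rewrite rsum_ind; [reflexivity| apply Hc; lia].
- intros p Hp. rewrite Nat.eqb_sym. reflexivity.
Qed.

Lemma cross_inner t th m' b nu :
  cos th * rsum m' (fun q => b q * cos (t * nu q)) + sin th * rsum m' (fun q => b q * sin (t * nu q))
  = rsum m' (fun q => b q * cos (th - t * nu q)).
Proof.
induction m'; simpl; [ring|]. rewrite <- IHm', cos_minus. ring.
Qed.

Lemma cross t m a mu m' b nu :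
  rsum m (fun p => a p * cos (t * mu p)) * rsum m' (fun q => b q * cos (t * nu q))
  + rsum m (fun p => a p * sin (t * mu p)) * rsum m' (fun q => b q * sin (t * nu q))
  = rsum m (fun p => rsum m' (fun q => a p * b q * cos (t * (mu p - nu q)))).
Proof.
induction m; simpl; [ring|].
rewrite <- IHm.
replace (rsum m' (fun q => a m * b q * cos (t * (mu m - nu q))))
  with (a m * rsum m' (fun q => b q * cos (t * mu m - t * nu q))).
- rewrite <- cross_inner. ring.
- rewrite <- rsum_scal. apply rsum_ext. intros. replace (t * (mu m - nu p)) with (t * mu m - t * nu p) by ring. ring.
Qed.

Lemma sq_sum t m a mu :
  (rsum m (fun p => a p * cos (t * mu p))) ^ 2 + (rsum m (fun p => a p * sin (t * mu p))) ^ 2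
  = rsum m (fun p => a p ^ 2)
    + 2 * rsum m (fun p' => rsum p' (fun p => a p * a p' * cos (t * (mu p - mu p')))).
Proof.
induction m; simpl; [ring|].
assert (E := cross t m a mu 1 (fun _ => a m) (fun _ => mu m)). simpl in E.
assert (E2 : rsum m (fun p => 0 + a p * a m * cos (t * (mu p - mu m)))
  = rsum m (fun p => a p * a m * cos (t * (mu p - mu m)))) by (apply rsum_ext; intros; ring).
rewrite E2 in E. rewrite <- E. clear E. simpl in IHm.
assert (S2 := sin2_cos2 (t * mu m)). unfold Rsqr in S2.
transitivity ((rsum m (fun p => a p * cos (t * mu p)) * (rsum m (fun p => a p * cos (t * mu p)) * 1) +
   rsum m (fun p => a p * sin (t * mu p)) * (rsum m (fun p => a p * sin (t * mu p)) * 1))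
   + a m * a m * (sin (t * mu m) * sin (t * mu m) + cos (t * mu m) * cos (t * mu m))
   + 2 * (rsum m (fun p => a p * cos (t * mu p)) * (0 + a m * cos (t * mu m)) +
      rsum m (fun p => a p * sin (t * mu p)) * (0 + a m * sin (t * mu m)))).
- ring.
- rewrite IHm, S2. ring.
Qed.

Lemma matpow_spec V L (P : nat -> nat -> nat -> R) :
  (forall x y, In x V -> In y V -> P 0%nat x y = if Nat.eqb x y then 1 else 0) ->
  (forall q x y, In x V -> In y V -> lsum V (fun z => L x z * P q z y) = P (S q) x y) ->
  forall q x y, In x V -> In y V -> matpow V L q x y = P q x y.
Proof.
intros H0 HS q. induction q; intros x y Hx Hy; simpl.
- rewrite H0 by assumption. reflexivity.
- unfold matmul. rewrite <- HS by assumption. apply lsum_ext. intros z Hz.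
  rewrite IHq by assumption. reflexivity.
Qed.

Lemma lsum_scal_r V c f : lsum V (fun z => f z * c) = lsum V f * c.
Proof. induction V; simpl; [ring| rewrite IHV; ring]. Qed.

Lemma lsum_minus V f g : lsum V (fun z => f z - g z) = lsum V f - lsum V g.
Proof. induction V; simpl; [ring| rewrite IHV; ring]. Qed.

Lemma eig_step V (L : nat -> nat -> R) m f g mu x q :
  (forall j, (j < m)%nat -> lsum V (fun z => L x z * f j z) = mu j * f j x) ->
  lsum V (fun z => L x z * rsum m (fun j => f j z * g j * mu j ^ q))
  = rsum m (fun j => f j x * g j * mu j ^ (S q)).
Proof.
intro H.
rewrite (lsum_ext V _ (fun z => rsum m (fun j => L x z * f j z * (g j * mu j ^ q)))).
- rewrite lsum_rsum. apply rsum_ext. intros j Hj.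
  rewrite lsum_scal_r, H by assumption. simpl. ring.
- intros z _. rewrite <- rsum_scal. apply rsum_ext. intros; ring.
Qed.

Lemma Lap_sum V adj x g : NoDup V -> In x V ->
  lsum V (fun z => Lap V adj x z * g z)
  = deg V adj x * g x - lsum V (fun z => (if adj x z then 1 else 0) * g z).
Proof.
intros ND Hx. unfold Lap.
rewrite (lsum_ext V _ (fun z => (if Nat.eqb x z then deg V adj x * g z else 0)
                                 - (if adj x z then 1 else 0) * g z)).
- rewrite lsum_minus, lsum_delta by assumption. reflexivity.
- intros z _. destruct (Nat.eqb x z); ring.
Qed.

Lemma Lap_one V adj x : NoDup V -> In x V -> lsum V (fun z => Lap V adj x z * 1) = 0.
Proof.
intros ND Hx. rewrite Lap_sum by assumption. unfold deg.
rewrite lsum_scal_r. ring.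
Qed.

Lemma fold_shift (g : nat -> R) l r :
  fold_right (fun z acc => g z + acc) r l = fold_right (fun z acc => g z + acc) 0 l + r.
Proof. induction l; simpl; [ring| rewrite IHl; ring]. Qed.

Lemma lsum_seq k g : lsum (seq 0 k) g = rsum k g.
Proof.
induction k; [reflexivity|]. rewrite seq_S. unfold lsum. rewrite fold_right_app. simpl.
rewrite fold_shift. fold (lsum (seq 0 k) g). rewrite IHk. ring.
Qed.

Lemma inv_sqrt_sq (r : R) : 0 < r -> (1 / sqrt r) * (1 / sqrt r) = 1 / r.
Proof.
intro H. assert (Hs : 0 < sqrt r) by (apply sqrt_lt_R0; exact H).
rewrite <- (sqrt_sqrt r) at 3 by lra. field. lra.
Qed.

Lemma block_compl (B : list nat) (vv : nat -> nat -> R) :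
  NoDup B -> (0 < length B)%nat ->
  (forall j j', (j < length B - 1)%nat -> (j' < length B - 1)%nat ->
      lsum B (fun z => vv j z * vv j' z) = if Nat.eqb j j' then 1 else 0) ->
  (forall j, (j < length B - 1)%nat ->
      lsum B (fun z => vv j z * (1 / sqrt (INR (length B)))) = 0) ->
  forall x y, In x B -> In y B ->
  rsum (length B - 1) (fun j => vv j x * vv j y) + 1 / INR (length B)
  = if Nat.eqb x y then 1 else 0.
Proof.
intros ND Hpos Hon Hone x y Hx Hy.
set (m := (length B - 1)%nat).
set (cc := 1 / sqrt (INR (length B))).
assert (Hn : 0 < INR (length B)) by (apply lt_0_INR; exact Hpos).
assert (Hcc : cc * cc = 1 / INR (length B)) by (apply inv_sqrt_sq; exact Hn).
set (e := fun p z => if Nat.ltb p m then vv p z else cc).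
assert (HL : length B = S m) by (unfold m; lia).
assert (Hon' : forall p q, (p < length B)%nat -> (q < length B)%nat ->
   lsum B (fun z => e p z * e q z) = if Nat.eqb p q then 1 else 0).
{ intros p q Hp Hq. unfold e.
  destruct (Nat.ltb_spec p m) as [Hpm|Hpm]; destruct (Nat.ltb_spec q m) as [Hqm|Hqm].
  + apply Hon; assumption.
  + rewrite Hone by assumption. destruct (Nat.eqb_spec p q); [lia|reflexivity].
  + rewrite (lsum_ext B _ (fun z => vv q z * (1 / sqrt (INR (length B))))) by (intros; unfold cc; ring).
    rewrite Hone by assumption. destruct (Nat.eqb_spec p q); [lia|reflexivity].
  + assert (p = q) by lia. subst q. rewrite Nat.eqb_refl. rewrite lsum_const, Hcc. field. lra. }
rewrite <- (Compl.completeness B e ND Hon' x y Hx Hy).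
rewrite HL. simpl. unfold e at 3 4. rewrite Nat.ltb_irrefl. rewrite Hcc.
f_equal. apply rsum_ext. intros p Hp. unfold e. apply Nat.ltb_lt in Hp. rewrite Hp. reflexivity.
rewrite HL; reflexivity.
Qed.

Definition NN (n k : nat) (c : nat -> nat) (alpha : nat -> nat -> R) (j : nat) : R :=
  rsum k (fun l => INR (length (part n c l)) * alpha j l ^ 2).

Lemma rsum_nonneg m f : (forall p, (p < m)%nat -> 0 <= f p) -> 0 <= rsum m f.
Proof.
induction m; intro H; simpl; [lra|].
assert (0 <= rsum m f) by (apply IHm; intros; apply H; lia).
assert (0 <= f m) by (apply H; lia). lra.
Qed.

Lemma NN_nonneg n k c alpha j : 0 <= NN n k c alpha j.
Proof.
unfold NN. apply rsum_nonneg. intros p _. apply Rmult_le_pos; [apply pos_INR|].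
apply pow2_ge_0.
Qed.

Lemma group_block n k c (F : nat -> R) : (forall x, (x < n)%nat -> (c x < k)%nat) ->
  lsum (seq 0 n) (fun z => F (c z)) = rsum k (fun l => INR (length (part n c l)) * F l).
Proof.
intro Hc. rewrite (group_sum n k c) by assumption. apply rsum_ext. intros l Hl.
rewrite (lsum_ext _ _ (fun _ => F l)).
- apply lsum_const.
- intros z Hz. apply in_part in Hz. destruct Hz as [_ ->]. reflexivity.
Qed.

Lemma alpha_compl n k c alpha :
  (forall x, (x < n)%nat -> (c x < k)%nat) ->
  (forall j j', (j < k)%nat -> (j' < k)%nat ->
          lsum (seq 0 n) (fun z =>
            alpha j (c z) / sqrt (rsum k (fun l => INR (length (part n c l)) * alpha j l ^ 2))
          * (alpha j' (c z) / sqrt (rsum k (fun l => INR (length (part n c l)) * alpha j' l ^ 2))))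
          = if Nat.eqb j j' then 1 else 0) ->
  forall l l', (l < k)%nat -> (l' < k)%nat ->
  rsum k (fun j => alpha j l * alpha j l' / NN n k c alpha j)
    * (sqrt (INR (length (part n c l))) * sqrt (INR (length (part n c l'))))
  = if Nat.eqb l l' then 1 else 0.
Proof.
intros Hc Hon l l' Hl Hl'.
set (ni := fun l => INR (length (part n c l))).
set (w := fun j l => alpha j l * sqrt (ni l) / sqrt (NN n k c alpha j)).
assert (Hw : forall p q, (p < length (seq 0 k))%nat -> (q < length (seq 0 k))%nat ->
   lsum (seq 0 k) (fun z => w p z * w q z) = if Nat.eqb p q then 1 else 0).
{ intros p q Hp Hq. rewrite length_seq in Hp, Hq. rewrite <- (Hon p q Hp Hq).
  change (rsum k (fun l => INR (length (part n c l)) * alpha p l ^ 2)) with (NN n k c alpha p).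
  change (rsum k (fun l => INR (length (part n c l)) * alpha q l ^ 2)) with (NN n k c alpha q).
  rewrite (group_block n k c (fun l => alpha p l / sqrt (NN n k c alpha p) * (alpha q l / sqrt (NN n k c alpha q)))) by assumption.
  rewrite lsum_seq. apply rsum_ext. intros z Hz. unfold w.
  assert (Hs : sqrt (ni z) * sqrt (ni z) = ni z) by (apply sqrt_sqrt; apply pos_INR).
  unfold ni in Hs. unfold ni. unfold Rdiv. rewrite <- Hs at 3. ring. }
assert (H := Compl.completeness (seq 0 k) w (seq_NoDup k 0) Hw l l').
rewrite length_seq in H. rewrite <- H by (apply in_seq; lia).
rewrite Rmult_comm, <- rsum_scal. apply rsum_ext. intros j Hj. unfold w.
assert (Hs : sqrt (NN n k c alpha j) * sqrt (NN n k c alpha j) = NN n k c alpha j)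
  by (apply sqrt_sqrt; apply NN_nonneg).
unfold Rdiv. replace (/ NN n k c alpha j) with (/ sqrt (NN n k c alpha j) * / sqrt (NN n k c alpha j))
  by (rewrite <- Rinv_mult, Hs; reflexivity). unfold ni. ring.
Qed.

Lemma NN_pos n k c alpha j :
  (forall j j', (j < k)%nat -> (j' < k)%nat ->
          lsum (seq 0 n) (fun z =>
            alpha j (c z) / sqrt (rsum k (fun l => INR (length (part n c l)) * alpha j l ^ 2))
          * (alpha j' (c z) / sqrt (rsum k (fun l => INR (length (part n c l)) * alpha j' l ^ 2))))
          = if Nat.eqb j j' then 1 else 0) ->
  (j < k)%nat -> NN n k c alpha j <> 0.
Proof.
intros Hon Hj E. specialize (Hon j j Hj Hj). rewrite Nat.eqb_refl in Hon.
unfold NN in E. rewrite E, sqrt_0 in Hon. unfold Rdiv in Hon. rewrite Rinv_0 in Hon.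
rewrite (lsum_ext _ _ (fun _ => 0)) in Hon by (intros; ring). rewrite lsum_zero in Hon. lra.
Qed.

Lemma alpha_same n k c alpha l :
  (forall x, (x < n)%nat -> (c x < k)%nat) ->
  (forall j j', (j < k)%nat -> (j' < k)%nat ->
          lsum (seq 0 n) (fun z =>
            alpha j (c z) / sqrt (rsum k (fun l => INR (length (part n c l)) * alpha j l ^ 2))
          * (alpha j' (c z) / sqrt (rsum k (fun l => INR (length (part n c l)) * alpha j' l ^ 2))))
          = if Nat.eqb j j' then 1 else 0) ->
  (l < k)%nat -> (0 < length (part n c l))%nat ->
  rsum k (fun j => alpha j l * alpha j l / NN n k c alpha j) = 1 / INR (length (part n c l)).
Proof.
intros Hc Hon Hl Hp. assert (H := alpha_compl n k c alpha Hc Hon l l Hl Hl).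
rewrite Nat.eqb_refl, sqrt_sqrt in H by apply pos_INR.
assert (0 < INR (length (part n c l))) by (apply lt_0_INR; exact Hp).
apply (Rmult_eq_reg_r (INR (length (part n c l)))); [|lra].
rewrite H. field. lra.
Qed.

Lemma alpha_diff n k c alpha l l' :
  (forall x, (x < n)%nat -> (c x < k)%nat) ->
  (forall j j', (j < k)%nat -> (j' < k)%nat ->
          lsum (seq 0 n) (fun z =>
            alpha j (c z) / sqrt (rsum k (fun l => INR (length (part n c l)) * alpha j l ^ 2))
          * (alpha j' (c z) / sqrt (rsum k (fun l => INR (length (part n c l)) * alpha j' l ^ 2))))
          = if Nat.eqb j j' then 1 else 0) ->
  (l < k)%nat -> (l' < k)%nat -> l <> l' ->
  (0 < length (part n c l))%nat -> (0 < length (part n c l'))%nat ->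
  rsum k (fun j => alpha j l * alpha j l' / NN n k c alpha j) = 0.
Proof.
intros Hc Hon Hl Hl' Hne Hp Hp'. assert (H := alpha_compl n k c alpha Hc Hon l l' Hl Hl').
destruct (Nat.eqb_spec l l'); [contradiction|].
assert (0 < sqrt (INR (length (part n c l)))) by (apply sqrt_lt_R0, lt_0_INR; exact Hp).
assert (0 < sqrt (INR (length (part n c l')))) by (apply sqrt_lt_R0, lt_0_INR; exact Hp').
apply Rmult_integral in H. destruct H as [H|H]; [exact H|].
exfalso. assert (0 < sqrt (INR (length (part n c l))) * sqrt (INR (length (part n c l')))) by (apply Rmult_lt_0_compat; assumption). lra.
Qed.

Lemma deg_split n k adj c x :
  (forall x, (x < n)%nat -> (c x < k)%nat) ->
  (forall i j, (i < k)%nat -> (j < k)%nat -> i <> j ->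
          all_adj n c adj i j \/ no_adj n c adj i j) ->
  (x < n)%nat ->
  deg (seq 0 n) adj x = deg (part n c (c x)) adj x + dtilde n k c adj (c x).
Proof.
intros Hc Hfic Hx. set (i := c x).
assert (Hi : (i < k)%nat) by (apply Hc; exact Hx).
assert (Hxi : In x (part n c i)) by (apply in_part; split; [exact Hx|reflexivity]).
unfold deg at 1. rewrite (group_sum n k c) by assumption.
unfold dtilde. rewrite <- (rsum_ind k i (deg (part n c i) adj x)) by assumption.
rewrite <- rsum_plus. apply rsum_ext. intros l Hl.
destruct (Nat.eqb_spec l i) as [->|Hli].
- destruct (excluded_middle_informative (i <> i /\ all_adj n c adj i i)) as [[H _]|_];
    [contradiction|]. unfold deg. ring.
- destruct (excluded_middle_informative (l <> i /\ all_adj n c adj i l)) as [[_ H]|H].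
  + rewrite (lsum_ext _ _ (fun _ => 1)).
    * rewrite lsum_const. ring.
    * intros z Hz. rewrite (H x z Hxi Hz). reflexivity.
  + destruct (Hfic i l Hi Hl (fun e => Hli (eq_sym e))) as [Ha|Hn].
    * exfalso. apply H. split; assumption.
    * rewrite (lsum_ext _ _ (fun _ => 0)).
      -- rewrite lsum_zero. ring.
      -- intros z Hz. rewrite (Hn x z Hxi Hz). reflexivity.
Qed.

Lemma v_sum0 (B : list nat) (f : nat -> R) : (0 < length B)%nat ->
  lsum B (fun z => f z * (1 / sqrt (INR (length B)))) = 0 -> lsum B f = 0.
Proof.
intros Hp H. rewrite lsum_scal_r in H.
assert (0 < sqrt (INR (length B))) by (apply sqrt_lt_R0, lt_0_INR; exact Hp).
apply Rmult_integral in H. destruct H as [H|H]; [exact H|].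
exfalso. unfold Rdiv in H. rewrite Rmult_1_l in H. apply Rinv_neq_0_compat in H; [exact H| lra].
Qed.

Lemma ext_eig n k adj c (lam : nat -> nat -> R) (v : nat -> nat -> nat -> R) i j x :
  (forall x, (x < n)%nat -> (c x < k)%nat) ->
  (forall i, (i < k)%nat -> (0 < length (part n c i))%nat) ->
  (forall i j, (i < k)%nat -> (j < k)%nat -> i <> j ->
          all_adj n c adj i j \/ no_adj n c adj i j) ->
  (forall i j x, (i < k)%nat -> (j < length (part n c i) - 1)%nat ->
          In x (part n c i) ->
          lsum (part n c i) (fun z => Lap (part n c i) adj x z * v i j z)
          = lam i j * v i j x) ->
  (forall i j, (i < k)%nat -> (j < length (part n c i) - 1)%nat ->
          lsum (part n c i) (fun z => v i j z * (1 / sqrt (INR (length (part n c i)))))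
          = 0) ->
  (i < k)%nat -> (j < length (part n c i) - 1)%nat -> (x < n)%nat ->
  lsum (seq 0 n) (fun z => Lap (seq 0 n) adj x z * (if Nat.eqb (c z) i then v i j z else 0))
  = (lam i j + dtilde n k c adj i) * (if Nat.eqb (c x) i then v i j x else 0).
Proof.
intros Hc Hne Hfic Hv_eig Hv_one Hi Hj Hx.
rewrite Lap_sum by (apply seq_NoDup || (apply in_seq; lia)).
assert (S : lsum (seq 0 n) (fun z => (if adj x z then 1 else 0) * (if Nat.eqb (c z) i then v i j z else 0))
          = lsum (part n c i) (fun z => (if adj x z then 1 else 0) * v i j z)).
{ unfold part. rewrite lsum_filter. apply lsum_ext. intros z _. destruct (Nat.eqb (c z) i); ring. }
rewrite S. clear S.
destruct (Nat.eqb_spec (c x) i) as [E|E].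
- rewrite (deg_split n k adj c x) by assumption. rewrite E.
  assert (Hxi : In x (part n c i)) by (apply in_part; split; assumption).
  assert (H := Hv_eig i j x Hi Hj Hxi).
  rewrite Lap_sum in H by (apply nodup_part || exact Hxi).
  replace ((lam i j + dtilde n k c adj i) * v i j x) with (lam i j * v i j x + dtilde n k c adj i * v i j x) by ring.
  rewrite <- H. ring.
- assert (Hxc : In x (part n c (c x))) by (apply in_part; split; [assumption|reflexivity]).
  assert (Hcx : (c x < k)%nat) by (apply Hc; exact Hx).
  assert (H0 : lsum (part n c i) (v i j) = 0).
  { apply v_sum0; [apply Hne; exact Hi|]. apply Hv_one; assumption. }
  destruct (Hfic (c x) i Hcx Hi E) as [Ha|Hn].
  + rewrite (lsum_ext _ _ (v i j)).
    * rewrite H0. ring.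
    * intros z Hz. rewrite (Ha x z Hxc Hz). ring.
  + rewrite (lsum_ext _ _ (fun _ => 0)).
    * rewrite lsum_zero. ring.
    * intros z Hz. rewrite (Hn x z Hxc Hz). ring.
Qed.

Lemma block_matpow n k adj c (lam : nat -> nat -> R) (v : nat -> nat -> nat -> R) i :
  (forall i, (i < k)%nat -> (0 < length (part n c i))%nat) ->
  (forall i j x, (i < k)%nat -> (j < length (part n c i) - 1)%nat ->
          In x (part n c i) ->
          lsum (part n c i) (fun z => Lap (part n c i) adj x z * v i j z)
          = lam i j * v i j x) ->
  (forall i j j', (i < k)%nat -> (j < length (part n c i) - 1)%nat ->
          (j' < length (part n c i) - 1)%nat ->
          lsum (part n c i) (fun z => v i j z * v i j' z)
          = if Nat.eqb j j' then 1 else 0) ->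
  (forall i j, (i < k)%nat -> (j < length (part n c i) - 1)%nat ->
          lsum (part n c i) (fun z => v i j z * (1 / sqrt (INR (length (part n c i)))))
          = 0) ->
  (i < k)%nat ->
  forall q x y, In x (part n c i) -> In y (part n c i) ->
  matpow (part n c i) (Lap (part n c i) adj) q x y
  = rsum (length (part n c i) - 1) (fun j => v i j x * v i j y * lam i j ^ q)
    + rsum 1 (fun p => 1 * (1 / INR (length (part n c i))) * 0 ^ q).
Proof.
intros Hne Hv_eig Hv_on Hv_one Hi.
apply matpow_spec.
- intros x y Hx Hy. rewrite <- (block_compl (part n c i) (v i) (nodup_part n c i) (Hne i Hi)
     (fun j j' => Hv_on i j j' Hi) (fun j => Hv_one i j Hi) x y Hx Hy).
  simpl. f_equal; [apply rsum_ext; intros; ring| ring].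
- intros q x y Hx Hy.
  rewrite (lsum_ext _ _ (fun z => Lap (part n c i) adj x z * rsum (length (part n c i) - 1) (fun j => v i j z * v i j y * lam i j ^ q)
       + Lap (part n c i) adj x z * rsum 1 (fun p => (fun _ _ => 1) p z * (1 / INR (length (part n c i))) * 0 ^ q)))
    by (intros; ring).
  rewrite lsum_plus. f_equal.
  + apply eig_step. intros j Hj. apply Hv_eig; assumption.
  + apply (eig_step _ _ 1 (fun _ _ => 1) (fun _ => 1 / INR (length (part n c i))) (fun _ => 0)).
    intros j Hj. rewrite Lap_one by (apply nodup_part || exact Hx). ring.
Qed.

Lemma gn_matpow n k adj c (lam : nat -> nat -> R) (v : nat -> nat -> nat -> R) alpha nu :
  (forall x, (x < n)%nat -> (c x < k)%nat) ->
  (forall i, (i < k)%nat -> (0 < length (part n c i))%nat) ->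
  (forall i j, (i < k)%nat -> (j < k)%nat -> i <> j ->
          all_adj n c adj i j \/ no_adj n c adj i j) ->
  (forall i j x, (i < k)%nat -> (j < length (part n c i) - 1)%nat ->
          In x (part n c i) ->
          lsum (part n c i) (fun z => Lap (part n c i) adj x z * v i j z)
          = lam i j * v i j x) ->
  (forall i j j', (i < k)%nat -> (j < length (part n c i) - 1)%nat ->
          (j' < length (part n c i) - 1)%nat ->
          lsum (part n c i) (fun z => v i j z * v i j' z)
          = if Nat.eqb j j' then 1 else 0) ->
  (forall i j, (i < k)%nat -> (j < length (part n c i) - 1)%nat ->
          lsum (part n c i) (fun z => v i j z * (1 / sqrt (INR (length (part n c i)))))
          = 0) ->
  (forall j j', (j < k)%nat -> (j' < k)%nat ->
          lsum (seq 0 n) (fun z =>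
            alpha j (c z) / sqrt (rsum k (fun l => INR (length (part n c l)) * alpha j l ^ 2))
          * (alpha j' (c z) / sqrt (rsum k (fun l => INR (length (part n c l)) * alpha j' l ^ 2))))
          = if Nat.eqb j j' then 1 else 0) ->
  (forall j x, (j < k)%nat -> (x < n)%nat ->
          lsum (seq 0 n) (fun z => Lap (seq 0 n) adj x z * alpha j (c z))
          = nu j * alpha j (c x)) ->
  forall q x y, In x (seq 0 n) -> In y (seq 0 n) ->
  matpow (seq 0 n) (Lap (seq 0 n) adj) q x y
  = rsum (length (part n c (c y)) - 1)
      (fun j => (if Nat.eqb (c x) (c y) then v (c y) j x else 0) * v (c y) j y
                * (lam (c y) j + dtilde n k c adj (c y)) ^ q)
    + rsum k (fun j => alpha j (c x) * (alpha j (c y) / NN n k c alpha j) * nu j ^ q).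
Proof.
intros Hc Hne Hfic Hv_eig Hv_on Hv_one Hx_on Hx_eig.
apply matpow_spec.
- intros x y Hx Hy. apply in_seq in Hx. apply in_seq in Hy.
  assert (Hcy : (c y < k)%nat) by (apply Hc; lia).
  assert (Hcx : (c x < k)%nat) by (apply Hc; lia).
  destruct (Nat.eqb_spec (c x) (c y)) as [E|E].
  + assert (Hxi : In x (part n c (c y))) by (apply in_part; split; [lia|exact E]).
    assert (Hyi : In y (part n c (c y))) by (apply in_part; split; [lia|reflexivity]).
    rewrite <- (block_compl (part n c (c y)) (v (c y)) (nodup_part n c (c y)) (Hne _ Hcy)
       (fun j j' => Hv_on _ j j' Hcy) (fun j => Hv_one _ j Hcy) x y Hxi Hyi).
    rewrite <- (alpha_same n k c alpha (c y) Hc Hx_on Hcy (Hne _ Hcy)).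
    simpl. f_equal; apply rsum_ext; intros; rewrite ?E; unfold Rdiv; ring.
  + rewrite (rsum_ext _ _ (fun _ => 0)) by (intros; simpl; ring).
    rewrite rsum_zero.
    rewrite (rsum_ext _ _ (fun j => alpha j (c x) * alpha j (c y) / NN n k c alpha j))
      by (intros; simpl; unfold Rdiv; ring).
    rewrite (alpha_diff n k c alpha (c x) (c y) Hc Hx_on Hcx Hcy E (Hne _ Hcx) (Hne _ Hcy)).
    destruct (Nat.eqb_spec x y) as [->|_]; [contradiction|ring].
- intros q x y Hx Hy. apply in_seq in Hx. apply in_seq in Hy.
  assert (Hcy : (c y < k)%nat) by (apply Hc; lia).
  rewrite (lsum_ext _ _ (fun z => Lap (seq 0 n) adj x z * rsum (length (part n c (c y)) - 1)
      (fun j => (if Nat.eqb (c z) (c y) then v (c y) j z else 0) * v (c y) j y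
                * (lam (c y) j + dtilde n k c adj (c y)) ^ q)
     + Lap (seq 0 n) adj x z * rsum k (fun j => alpha j (c z) * (alpha j (c y) / NN n k c alpha j) * nu j ^ q)))
    by (intros; ring).
  rewrite lsum_plus. f_equal.
  + apply (eig_step _ _ _ (fun j z => if Nat.eqb (c z) (c y) then v (c y) j z else 0)).
    intros j Hj. apply (ext_eig n k adj c lam v); assumption || lia.
  + apply (eig_step _ _ _ (fun j z => alpha j (c z))).
    intros j Hj. apply Hx_eig; assumption || lia.
Qed.

Lemma rsum_1 f : rsum 1 f = f 0%nat.
Proof. simpl. ring. Qed.

Lemma rsum_0 f : rsum 0 f = 0.
Proof. reflexivity. Qed.

Lemma Ptrans_expand V adj t x y m a mu m' b nu :
  (forall q, matpow V (Lap V adj) q x y =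
     rsum m (fun p => a p * mu p ^ q) + rsum m' (fun p => b p * nu p ^ q)) ->
  Ptrans V adj t x y =
    (rsum m (fun p => a p ^ 2)
     + 2 * rsum m (fun p' => rsum p' (fun p => a p * a p' * cos (t * (mu p - mu p')))))
    + (rsum m' (fun p => b p ^ 2)
     + 2 * rsum m' (fun p' => rsum p' (fun p => b p * b p' * cos (t * (nu p - nu p')))))
    + 2 * rsum m (fun p => rsum m' (fun q => a p * b q * cos (t * (mu p - nu q)))).
Proof.
intro H. unfold Ptrans. rewrite (Ure_spec V adj t x y m a mu m' b nu H), (Uim_spec V adj t x y m a mu m' b nu H).
rewrite <- sq_sum, <- sq_sum, <- cross. ring.
Qed.

Theorem lemma2p1
  (n k : nat) (adj : nat -> nat -> bool) (c : nat -> nat)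
  (lam : nat -> nat -> R) (v : nat -> nat -> nat -> R)
  (alpha : nat -> nat -> R) (nu : nat -> R)
  (* simple graph on vertices 0..n-1 *)
  (Hsym : forall x y, (x < n)%nat -> (y < n)%nat -> adj x y = adj y x)
  (Hirr : forall x, (x < n)%nat -> adj x x = false)
  (* fully interconnected decomposition into k nonempty blocks *)
  (Hc : forall x, (x < n)%nat -> (c x < k)%nat)
  (Hne : forall i, (i < k)%nat -> (0 < length (part n c i))%nat)
  (Hfic : forall i j, (i < k)%nat -> (j < k)%nat -> i <> j ->
          all_adj n c adj i j \/ no_adj n c adj i j)
  (* eigenvectors v i j (j < n_i - 1) of L_{G_{n_i}} with eigenvalues lam i j *)
  (Hv_eig : forall i j x, (i < k)%nat -> (j < length (part n c i) - 1)%nat ->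
          In x (part n c i) ->
          lsum (part n c i) (fun z => Lap (part n c i) adj x z * v i j z)
          = lam i j * v i j x)
  (* {v i 0, ..., v i (n_i-2), 1/sqrt n_i 1} is orthonormal (hence an ONB) *)
  (Hv_on : forall i j j', (i < k)%nat -> (j < length (part n c i) - 1)%nat ->
          (j' < length (part n c i) - 1)%nat ->
          lsum (part n c i) (fun z => v i j z * v i j' z)
          = if Nat.eqb j j' then 1 else 0)
  (Hv_one : forall i j, (i < k)%nat -> (j < length (part n c i) - 1)%nat ->
          lsum (part n c i) (fun z => v i j z * (1 / sqrt (INR (length (part n c i)))))
          = 0)
  (* {x_j / sqrt N_j} orthonormal, where x_j(v) = alpha j (c v) *)
  (Hx_on : forall j j', (j < k)%nat -> (j' < k)%nat ->
          lsum (seq 0 n) (fun z =>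
            alpha j (c z) / sqrt (rsum k (fun l => INR (length (part n c l)) * alpha j l ^ 2))
          * (alpha j' (c z) / sqrt (rsum k (fun l => INR (length (part n c l)) * alpha j' l ^ 2))))
          = if Nat.eqb j j' then 1 else 0)
  (* L_{G_n} x_j = nu_j x_j *)
  (Hx_eig : forall j x, (j < k)%nat -> (x < n)%nat ->
          lsum (seq 0 n) (fun z => Lap (seq 0 n) adj x z * alpha j (c z))
          = nu j * alpha j (c x))
  (t : R) (Ht : 0 <= t) :
  let ni i := INR (length (part n c i)) in
  let N j := rsum k (fun l => INR (length (part n c l)) * alpha j l ^ 2) in
  (forall i x y, (i < k)%nat -> In x (part n c i) -> In y (part n c i) ->
     let m := (length (part n c i) - 1)%nat in
     let PGi :=
       rsum m (fun j => v i j x ^ 2 * v i j y ^ 2) + 1 / ni i ^ 2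
       + 2 * rsum m (fun j' => rsum j' (fun j =>
               v i j x * v i j y * v i j' x * v i j' y * cos (t * (lam i j - lam i j'))))
       + 2 / ni i * rsum m (fun j => v i j x * v i j y * cos (t * lam i j)) in
     let Ptil :=
       rsum k (fun j => alpha j i ^ 4 / N j ^ 2)
       + 2 * rsum k (fun j' => rsum j' (fun j =>
               alpha j i ^ 2 * alpha j' i ^ 2 * cos (t * (nu j - nu j')) / (N j * N j'))) in
     Ptrans (part n c i) adj t x y = PGi /\
     Ptrans (seq 0 n) adj t x y =
       Ptrans (part n c i) adj t x y + Ptil - 1 / ni i ^ 2
       - 2 / ni i * rsum m (fun j => v i j x * v i j y * cos (t * lam i j))
       + 2 * rsum m (fun j => rsum k (fun j' =>
               v i j x * v i j y * alpha j' i ^ 2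
               * cos (t * (lam i j + dtilde n k c adj i - nu j')) / N j')))
  /\
  (forall i i' x y, (i < k)%nat -> (i' < k)%nat -> i <> i' ->
     In x (part n c i) -> In y (part n c i') ->
     Ptrans (seq 0 n) adj t x y =
       rsum k (fun j => alpha j i ^ 2 * alpha j i' ^ 2 / N j ^ 2)
       + 2 * rsum k (fun j' => rsum j' (fun j =>
               alpha j i * alpha j i' * alpha j' i * alpha j' i'
               * cos (t * (nu j - nu j')) / (N j * N j')))).
Proof.
intros ni N. subst ni N. cbv beta.
assert (HNpos : forall j, (j < k)%nat -> NN n k c alpha j <> 0)
  by (intros; apply NN_pos; assumption).
unfold NN in HNpos.
split.
- intros i x y Hi Hx Hy m PGi Ptil. subst m PGi Ptil.
  assert (Hnpos : 0 < INR (length (part n c i))) by (apply lt_0_INR; apply Hne; exact Hi).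
  assert (HB : Ptrans (part n c i) adj t x y =
     rsum (length (part n c i) - 1) (fun j => v i j x ^ 2 * v i j y ^ 2) + 1 / INR (length (part n c i)) ^ 2 +
     2 * rsum (length (part n c i) - 1) (fun j' => rsum j' (fun j =>
           v i j x * v i j y * v i j' x * v i j' y * cos (t * (lam i j - lam i j')))) +
     2 / INR (length (part n c i)) * rsum (length (part n c i) - 1) (fun j => v i j x * v i j y * cos (t * lam i j))).
  { rewrite (Ptrans_expand _ adj t x y (length (part n c i) - 1) (fun j => v i j x * v i j y) (lam i)
              1 (fun _ => 1 * (1 / INR (length (part n c i)))) (fun _ => 0)).
    2: { intro q. apply (block_matpow n k adj c lam v i); assumption. }
    rewrite (rsum_ext _ (fun p => (v i p x * v i p y) ^ 2) (fun j => v i j x ^ 2 * v i j y ^ 2)) by (intros; ring).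
    rewrite (rsum_ext _ (fun p' => rsum p' (fun p => v i p x * v i p y * (v i p' x * v i p' y) * cos (t * (lam i p - lam i p'))))
      (fun j' => rsum j' (fun j => v i j x * v i j y * v i j' x * v i j' y * cos (t * (lam i j - lam i j')))))
      by (intros; apply rsum_ext; intros; ring).
    rewrite (rsum_ext _ (fun p => rsum 1 (fun _ => v i p x * v i p y * (1 * (1 / INR (length (part n c i)))) * cos (t * (lam i p - 0))))
      (fun j => 1 / INR (length (part n c i)) * (v i j x * v i j y * cos (t * lam i j))))
      by (intros; rewrite rsum_1, Rminus_0_r; ring).
    rewrite rsum_scal, !rsum_1, rsum_0. field. lra. }
  split; [exact HB|].
  apply in_part in Hx. apply in_part in Hy. destruct Hx as [Hxn Hcx]. destruct Hy as [Hyn Hcy].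
  assert (Hq : forall q, matpow (seq 0 n) (Lap (seq 0 n) adj) q x y =
     rsum (length (part n c i) - 1) (fun j => (v i j x * v i j y) * (lam i j + dtilde n k c adj i) ^ q)
     + rsum k (fun j => (alpha j i * (alpha j i / NN n k c alpha j)) * nu j ^ q)).
  { intro q. rewrite (gn_matpow n k adj c lam v alpha nu) by (assumption || (apply in_seq; lia)).
    rewrite Hcx, Hcy, Nat.eqb_refl. reflexivity. }
  rewrite (Ptrans_expand _ adj t x y _ _ _ _ _ _ Hq). rewrite HB.
  rewrite (rsum_ext _ (fun p => (v i p x * v i p y) ^ 2) (fun j => v i j x ^ 2 * v i j y ^ 2)) by (intros; ring).
  rewrite (rsum_ext _ (fun p' => rsum p' (fun p => v i p x * v i p y * (v i p' x * v i p' y) *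
        cos (t * (lam i p + dtilde n k c adj i - (lam i p' + dtilde n k c adj i)))))
      (fun j' => rsum j' (fun j => v i j x * v i j y * v i j' x * v i j' y * cos (t * (lam i j - lam i j')))))
    by (intros; apply rsum_ext; intros;
        replace (lam i p0 + dtilde n k c adj i - (lam i p + dtilde n k c adj i)) with (lam i p0 - lam i p) by ring; ring).
  rewrite (rsum_ext k (fun p => (alpha p i * (alpha p i / NN n k c alpha p)) ^ 2)
      (fun j => alpha j i ^ 4 / rsum k (fun l => INR (length (part n c l)) * alpha j l ^ 2) ^ 2))
    by (intros; unfold NN; field; apply HNpos; lia).
  rewrite (rsum_ext k (fun p' => rsum p' (fun p => alpha p i * (alpha p i / NN n k c alpha p) *
         (alpha p' i * (alpha p' i / NN n k c alpha p')) * cos (t * (nu p - nu p'))))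
      (fun j' => rsum j' (fun j => alpha j i ^ 2 * alpha j' i ^ 2 * cos (t * (nu j - nu j')) /
         (rsum k (fun l => INR (length (part n c l)) * alpha j l ^ 2) *
          rsum k (fun l => INR (length (part n c l)) * alpha j' l ^ 2)))))
    by (intros; apply rsum_ext; intros; unfold NN; field; split; apply HNpos; lia).
  rewrite (rsum_ext _ (fun p => rsum k (fun q => v i p x * v i p y * (alpha q i * (alpha q i / NN n k c alpha q)) *
        cos (t * (lam i p + dtilde n k c adj i - nu q))))
      (fun j => rsum k (fun j' => v i j x * v i j y * alpha j' i ^ 2 *
        cos (t * (lam i j + dtilde n k c adj i - nu j')) /
        rsum k (fun l => INR (length (part n c l)) * alpha j' l ^ 2))))
    by (intros; apply rsum_ext; intros; unfold NN; field; apply HNpos; lia).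
  ring.
- intros i i' x y Hi Hi' Hii Hx Hy.
  apply in_part in Hx. apply in_part in Hy. destruct Hx as [Hxn Hcx]. destruct Hy as [Hyn Hcy].
  assert (Hq : forall q, matpow (seq 0 n) (Lap (seq 0 n) adj) q x y =
     rsum 0 (fun j => 0 * 0 ^ q)
     + rsum k (fun j => (alpha j i * (alpha j i' / NN n k c alpha j)) * nu j ^ q)).
  { intro q. rewrite (gn_matpow n k adj c lam v alpha nu) by (assumption || (apply in_seq; lia)).
    rewrite Hcx, Hcy. destruct (Nat.eqb_spec i i') as [E|_]; [contradiction|].
    rewrite (rsum_ext _ _ (fun _ => 0)) by (intros; ring). rewrite rsum_zero, rsum_0. reflexivity. }
  rewrite (Ptrans_expand _ adj t x y _ _ _ _ _ _ Hq).
  rewrite !rsum_0.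
  rewrite (rsum_ext k (fun p => (alpha p i * (alpha p i' / NN n k c alpha p)) ^ 2)
      (fun j => alpha j i ^ 2 * alpha j i' ^ 2 / rsum k (fun l => INR (length (part n c l)) * alpha j l ^ 2) ^ 2))
    by (intros; unfold NN; field; apply HNpos; lia).
  rewrite (rsum_ext k (fun p' => rsum p' (fun p => alpha p i * (alpha p i' / NN n k c alpha p) *
         (alpha p' i * (alpha p' i' / NN n k c alpha p')) * cos (t * (nu p - nu p'))))
      (fun j' => rsum j' (fun j => alpha j i * alpha j i' * alpha j' i * alpha j' i' * cos (t * (nu j - nu j')) /
         (rsum k (fun l => INR (length (part n c l)) * alpha j l ^ 2) *
          rsum k (fun l => INR (length (part n c l)) * alpha j' l ^ 2)))))
    by (intros; apply rsum_ext; intros; unfold NN; field; split; apply HNpos; lia).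
  ring.
Qed.
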